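(* Let $n,w,d\ge1$, $N=2^n$, and let $\mathbb{F}$ be a field containing an element of multiplicative order at least $(Ndw^2)^2$ and at least $w^2$ distinct elements. In the space of multilinear polynomials in $x_1,\ldots,x_n$, the set of (multilinear) polynomials computed by width-$w^2$, length-$n$ roABPs is a succinct hitting set for the class of $N$-variate polynomials of individual degree at most $d$ computed by width-$w$, length-$N$ roABPs that read their variables in a monomial-compatible ordering; that is, for every non-zero such $F\in\mathbb{F}[X_1,\ldots,X_N]$ there is a multilinear $f\in\mathbb{F}[x_1,\ldots,x_n]$ computed by a width-$w^2$ roABP of length $n$ such that $F(\mathrm{coeff}(f))\ne0$.
   Context: A read-once oblivious algebraic branching program (roABP) of width $w$ and length $L$ in variables $X_1,\ldots,X_L$ and variable order $\sigma$ computes $\big(\prod_{i=1}^L M_i(X_{\sigma(i)})\big)_{1,1}$ where each $M_i$ is a $w\times w$ matrix whose entries are univariate polynomials in $X_{\sigma(i)}$. For multilinear $f\in\mathbb{F}[x_1,\ldots,x_n]$, $\mathrm{coeff}(f)\in\mathbb{F}^{2^n}$ is its vector of coefficients in the multilinear monomial basis, and multilinear monomials are identified with indices in $[N]$ via binary representation (so $\mathrm{coeff}(f)$ is plugged in for $X_1,\ldots,X_N$). A monomial-compatible ordering of $X_1,\ldots,X_N$ is an ordering obtained from some permutation $\sigma$ of $[n]$ by ordering the multilinear monomials in $x_1,\ldots,x_n$ lexicographically with respect to the variable order $\sigma$ and transporting this order to $[N]$ via the canonical identification of multilinear monomials with indices; there are $n!$ such orderings. *)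

(* Defs.v *)
From HB Require Import structures.
From mathcomp Require Import all_boot all_order all_algebra all_fingroup.
From mathcomp Require Import mpoly.
Set Implicit Arguments. Unset Strict Implicit. Unset Printing Implicit Defensive.
Import GRing.Theory.
Local Open Scope ring_scope.

Definition univ_in_var (R : fieldType) (L : nat) (j : 'I_L) (p : {poly R})
  : {mpoly R[L]} := \sum_(k < size p) p`_k *: 'X_j ^+ k.

Definition roABP_mx (R : fieldType) (w L : nat) (sigma : 'S_L)
  (M : 'I_L -> 'M[{poly R}]_w) : 'M[{mpoly R[L]}]_w :=
  \big[@mulmx _ w w w / 1%:M]_(i < L) map_mx (univ_in_var (sigma i)) (M i).

Definition roABP_computes (R : fieldType) (w L : nat) (ok : 'S_L -> Prop)
  (P : {mpoly R[L]}) : Prop :=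
  exists (sigma : 'S_L) (M : 'I_L -> 'M[{poly R}]_w) (i0 : 'I_w),
    ok sigma /\ val i0 = 0%N /\ P = roABP_mx sigma M i0 i0.

Definition indiv_deg_le (R : fieldType) (L d : nat) (P : {mpoly R[L]}) : Prop :=
  forall m : 'X_{1..L}, m \in msupp P -> forall i : 'I_L, (m i <= d)%N.

Definition multilinear (R : fieldType) (n : nat) (f : {mpoly R[n]}) : Prop :=
  indiv_deg_le 1 f.

(* Identification of indices k in [0, 2^n) with multilinear monomials:
   the exponent of x_i (i = 0..n-1) is the i-th binary digit of k
   (least significant digit <-> x_0). *)
Definition mono_of_index (n : nat) (k : nat) : 'X_{1..n} :=
  [multinom (odd (k %/ 2 ^ i)) : nat | i < n].

Definition coeff_vec (R : fieldType) (n : nat) (f : {mpoly R[n]}) : 'I_(2 ^ n) -> R :=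
  fun k => f@_(mono_of_index n k).

(* For a permutation pi of the n variables,
   the multilinear monomials are ordered lexicographically with respect to
   the variable order x_(pi 0), ..., x_(pi (n-1)) (exponent 0 before 1);
   the r-th monomial in this order is the one whose exponent of x_(pi j) is
   the (n-1-j)-th binary digit of r; its index is sum_j digit * 2^(pi j).
   sigma : 'S_(2^n) is monomial-compatible iff sigma r is that index for all
   r, for some pi. *)
Definition lex_index (n : nat) (pi : 'S_n) (r : nat) : nat :=
  \sum_(j < n) (odd (r %/ 2 ^ (n - 1 - j)) * 2 ^ (pi j))%N.

Definition monomial_compatible (n : nat) (sigma : 'S_(2 ^ n)) : Prop :=
  exists pi : 'S_n, forall r : 'I_(2 ^ n), val (sigma r) = lex_index pi r.

Definition mult_order_ge (R : fieldType) (a : R) (k : nat) : Prop :=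
  a != 0 /\ forall j : nat, (0 < j < k)%N -> a ^+ j != 1.

(* Main.v *)
Require Import Defs.
From HB Require Import structures.
From mathcomp Require Import all_boot all_order all_algebra all_fingroup.
From mathcomp Require Import mpoly.
From mathcomp Require Import zify.
From Stdlib Require Import Classical.
Set Implicit Arguments. Unset Strict Implicit. Unset Printing Implicit Defensive.
Import GRing.Theory.

Definition bit (b i : nat) : bool := odd (i %/ 2 ^ b).

Lemma bit_small h i : i < 2 ^ h -> bit h i = false.
Proof. by move=> lt; rewrite /bit divn_small. Qed.

Lemma bit_top h i : i < 2 ^ h -> bit h (2 ^ h + i) = true.
Proof.
move=> lt; rewrite /bit divnDl ?dvdnn // divnn expn_gt0 /= divn_small //.
Qed.

Lemma bit_low h h' i : h' < h -> bit h' (2 ^ h + i) = bit h' i.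
Proof.
move=> lt; rewrite /bit divnDl; last by rewrite dvdn_exp2l // ltnW.
rewrite -{1}(subnK (ltnW lt)) expnD mulnK ?expn_gt0 //.
by rewrite oddD oddX orbF subn_eq0 leqNgt lt.
Qed.

Lemma bit_sum (a : nat -> bool) n v : v < n ->
  bit v (\sum_(l < n) a l * 2 ^ l) = a v.
Proof.
elim: n a v => [|n IH] a v //= lt.
rewrite big_ord_recl /= expn0 muln1.
have -> : \sum_(i < n) a (lift ord0 i) * 2 ^ (lift ord0 i) =
          2 * \sum_(i < n) a i.+1 * 2 ^ i.
  rewrite big_distrr /=; apply: eq_bigr => i _.
  by rewrite /= /bump /= add1n expnS mulnCA.
case: v lt => [|v] lt.
  by rewrite /bit expn0 divn1 oddD oddM /=; case: (a 0).
rewrite /bit expnS divnMA.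
have -> : (a 0 + 2 * \sum_(i < n) a i.+1 * 2 ^ i) %/ 2 = \sum_(i < n) a i.+1 * 2 ^ i.
  rewrite addnC mulnC divnMDl // divn_small ?addn0 //; by case: (a 0).
exact: (IH (fun i => a i.+1) v lt).
Qed.

Local Open Scope ring_scope.

Section CNR.
Variable R : fieldType.
Variable V : Type.
Variable line : V -> V -> R -> V.
Hypothesis line0 : forall a b, line a b 0 = a.
Hypothesis line1 : forall a b, line a b 1 = b.

Definition lpoly D (g : V -> R) := forall a b, exists p : {poly R},
  (size p <= D.+1)%N /\ forall t, g (line a b t) = p.[t].

Lemma cnr_aux D a b m (Pr : nat -> R -> Prop) :
  (forall i, (i < m)%N -> exists g, lpoly D g /\ (exists t, g (line a b t) != 0)
     /\ forall t, g (line a b t) != 0 -> Pr i t) ->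
  exists p : {poly R}, p != 0 /\ (size p <= m * D + 1)%N /\
     forall t, p.[t] != 0 -> forall i, (i < m)%N -> Pr i t.
Proof.
elim: m => [|m IH] H.
  exists 1; rewrite oner_eq0 size_poly1; split=> //; split=> //.
have [p [pn0 [sp Hp]]] : exists p : {poly R}, p != 0 /\ (size p <= m * D + 1)%N /\
     forall t, p.[t] != 0 -> forall i, (i < m)%N -> Pr i t.
  by apply: IH => i lt_im; apply: H; apply: ltnW.
have [g [lg [[t0 gt0] Hg]]] := H m (ltnSn m).
have [q [sq Hq]] := lg a b.
have qn0 : q != 0 by apply/eqP=> q0; move: gt0; rewrite Hq q0 horner0 eqxx.
exists (q * p); split; first by rewrite mulf_neq0.
split.
  apply: leq_trans (size_polyMleq _ _) _.
  rewrite mulSn; move: sq sp; lia.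
move=> t; rewrite hornerM mulf_eq0 negb_or => /andP [qt pt] i.
rewrite ltnS leq_eqVlt => /orP [/eqP ->|lt_im]; last exact: Hp.
by apply: Hg; rewrite Hq.
Qed.

Lemma cnr D (s : seq R) (v0 : V) m (Pr : nat -> V -> Prop) :
  uniq s -> (m * D < size s)%N ->
  (forall i, (i < m)%N -> exists g, lpoly D g /\ (exists v, g v != 0)
     /\ forall u, g u != 0 -> Pr i u) ->
  exists u, forall i, (i < m)%N -> Pr i u.
Proof.
move=> us.
suff: (m * D < size s)%N ->
  (forall i, (i < m)%N -> exists g, lpoly D g /\ (exists v, g v != 0)
     /\ forall u, g u != 0 -> Pr i u) ->
  exists u, forall i, (i < m)%N -> exists g, lpoly D g /\ g u != 0 /\
     forall u, g u != 0 -> Pr i u.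
  move=> H lt H'; have [u Hu] := H lt H'; exists u => i lti.
  by have [g [_ [gu Hg]]] := Hu i lti; apply: Hg.
elim: m => [|m IH] lt H; first by exists v0.
have [u0 Hu0] : exists u, forall i, (i < m)%N -> exists g, lpoly D g /\ g u != 0 /\
     forall u, g u != 0 -> Pr i u.
  apply: IH; first by apply: leq_ltn_trans lt; rewrite leq_mul2r leqnSn orbT.
  by move=> i lti; apply: H; apply: ltnW.
have [g1 [lg1 [[v1 gv1] Hg1]]] := H m (ltnSn m).
pose Pr' i t := exists g, lpoly D g /\ g (line u0 v1 t) != 0 /\
     forall u, g u != 0 -> Pr i u.
case: (@cnr_aux D u0 v1 m.+1 Pr') => [|p [pn0 [sp Hp]]].
  move=> i; rewrite ltnS leq_eqVlt => /orP [/eqP ->|lti].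
    exists g1; split=> //; split; first by exists 1; rewrite line1.
    by move=> t gt; exists g1.
  have [g [lg [gu Hg]]] := Hu0 i lti.
  exists g; split=> //; split; first by exists 0; rewrite line0.
  by move=> t gt; exists g.
have : ~~ all (root p) s.
  apply/negP=> allr.
  have := max_poly_roots pn0 allr us; rewrite ltnNge => /negP; apply.
  by apply: leq_trans sp _; rewrite addn1.
case/allPn => t _ nr.
exists (line u0 v1 t) => i lti; exact: Hp nr i lti.
Qed.
End CNR.


Section Greedy.
Variable R : fieldType.
Variable V : Type.
Variable line : V -> V -> R -> V.
Hypothesis line0 : forall a b, line a b 0 = a.
Hypothesis line1 : forall a b, line a b 1 = b.
Variable k : nat.

Definition lpolyv D (phi : V -> 'rV[R]_k) := forall a b,
  exists P : 'rV[{poly R}]_k, (forall j, (size (P ord0 j) <= D.+1)%N) /\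
    forall t, phi (line a b t) = map_mx (fun p => p.[t]) P.

Definition spanL (vs : seq 'rV[R]_k) : 'M[R]_k :=
  foldr (fun v S => (v + S)%MS) 0 vs.

Lemma nz_entry (A : 'rV[R]_k) : A != 0 -> exists j, A 0 j != 0.
Proof.
move=> An0; apply: NNPP => H; move/negP: An0; apply; apply/eqP/matrixP => i j.
rewrite [i]ord1 mxE; apply: NNPP => Hj; apply: H; exists j; exact/eqP.
Qed.

Lemma greedy D (s : seq R) (v0 : V) m (phi : nat -> V -> 'rV[R]_k) :
  uniq s -> (m * D < size s)%N -> (forall i, (i < m)%N -> lpolyv D (phi i)) ->
  exists us : seq V, size us = k /\ forall i, (i < m)%N -> forall u,
    (phi i u <= spanL (map (phi i) us))%MS.
Proof.
move=> us lt lp.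
suff H : forall t, (t <= k)%N -> exists us : seq V, size us = t /\ forall i, (i < m)%N ->
    (forall u, (phi i u <= spanL (map (phi i) us))%MS) \/
    (t <= \rank (spanL (map (phi i) us)))%N.
  have [vs [sz Hv]] := H k (leqnn k); exists vs; split=> // i lti u.
  case: (Hv i lti) => [->//|rk]; apply: submx_full.
  by rewrite /row_full eqn_leq rank_leq_col.
elim=> [|t IH] ltk; first by exists [::]; split=> // i _; right.
have [vs [sz Hv]] := IH (ltnW ltk).
pose S i := spanL (map (phi i) vs).
have [u Hu] : exists u, forall i, (i < m)%N ->
    (forall u', (phi i u' <= S i)%MS) \/ ~~ (phi i u <= S i)%MS.
  apply: (@cnr R V line line0 line1 D s v0 m) => // i lti.
  case: (classic (forall u', (phi i u' <= S i)%MS)) => [sat|unsat].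
    exists (fun _ => 1); split.
      by move=> a b; exists 1; rewrite size_poly1; split=> // t0; rewrite hornerC.
    by split; [exists v0; rewrite oner_eq0|move=> *; left].
  have [u1 nu1] : exists u1, ~~ (phi i u1 <= S i)%MS.
    apply: NNPP => H; apply: unsat => u'; apply: NNPP => H'; apply: H.
    by exists u'; apply/negP.
  have : phi i u1 *m cokermx (S i) != 0 by rewrite -submxE.
  case/nz_entry => j Hj.
  exists (fun u => (phi i u *m cokermx (S i)) 0 j); split; last split.
  - move=> a b; have [P [sP HP]] := lp i lti a b.
    exists (\sum_l (cokermx (S i) l j)%:P * P 0 l); split.
      apply: leq_trans (size_sum _ _ _) _; apply/bigmax_leqP => l _.
      by rewrite mul_polyC; apply: leq_trans (size_scale_leq _ _) _.
    move=> t0; rewrite HP !mxE horner_sum; apply: eq_bigr => l _.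
    by rewrite mxE hornerM hornerC mulrC.
  - by exists u1.
  - move=> u gu; right; apply/negP; rewrite submxE => /eqP H0.
    by move: gu; rewrite H0 mxE eqxx.
exists (u :: vs); split; first by rewrite /= sz.
move=> i lti; rewrite /= -/(S i).
case: (Hv i lti) => [sat|rk].
  left=> u'; apply: submx_trans (sat u') _; exact: addsmxSr.
case: (Hu i lti) => [sat|ns].
  left=> u'; apply: submx_trans (sat u') _; exact: addsmxSr.
right; apply: leq_ltn_trans rk _.
rewrite (ltn_leqif (mxrank_leqif_sup (addsmxSr _ _))).
apply/negP => H; move/negP: ns; apply; apply: submx_trans H; exact: addsmxSl.
Qed.
End Greedy.


Section Core.
Variable R : fieldType.
Variables (w d K : nat).
Variable T : nat -> 'M[{poly R}]_w.
Hypothesis hT : forall r a b, (size (T r a b) <= d.+1)%N.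

Definition Ev r (x : R) : 'M[R]_w := map_mx (fun p => p.[x]) (T r).

Fixpoint blk (h b : nat) (c : nat -> R) : 'M[R]_w :=
  match h with
  | 0 => Ev b (c 0%N)
  | h'.+1 => blk h' b.*2 c *m blk h' b.*2.+1 (fun i => c (i + 2 ^ h')%N)
  end.

Fixpoint blkP (h b : nat) (c c' : nat -> R) : 'M[{poly R}]_w :=
  match h with
  | 0 => map_mx (fun p => p \Po ((c 0%N)%:P + c' 0%N *: 'X)) (T b)
  | h'.+1 => blkP h' b.*2 c c' *m
             blkP h' b.*2.+1 (fun i => c (i + 2 ^ h')%N) (fun i => c' (i + 2 ^ h')%N)
  end.

Lemma blk_ext h b c c' : (forall i, (i < 2 ^ h)%N -> c i = c' i) ->
  blk h b c = blk h b c'.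
Proof.
elim: h b c c' => [|h IH] b c c' H /=; first by rewrite H.
rewrite (IH _ c c'); last by move=> i lti; apply: H; rewrite expnS; lia.
congr (_ *m _); apply: IH => i lti; apply: H; rewrite expnS; lia.
Qed.

Lemma blkP_eval h b c c' t :
  map_mx (horner_eval t) (blkP h b c c') = blk h b (fun i => c i + t * c' i).
Proof.
elim: h b c c' => [|h IH] b c c' /=.
  apply/matrixP => i j; rewrite !mxE horner_evalE horner_comp.
  by rewrite hornerD hornerC hornerZ hornerX mulrC.
by rewrite map_mxM !IH.
Qed.

Lemma size_mx_mul (A B : 'M[{poly R}]_w) (a b : nat) :
  (forall i j, size (A i j) <= a.+1)%N -> (forall i j, size (B i j) <= b.+1)%N ->
  forall i j, (size ((A *m B) i j) <= (a + b).+1)%N.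
Proof.
move=> HA HB i j; rewrite mxE; apply: leq_trans (size_sum _ _ _) _.
apply/bigmax_leqP => l _; apply: leq_trans (size_polyMleq _ _) _.
rewrite -subn1; apply: leq_trans (leq_sub2r 1 (leq_add (HA i l) (HB l j))) _; lia.
Qed.

Lemma blkP_size h b c c' i j : (size (blkP h b c c' i j) <= (2 ^ h * d).+1)%N.
Proof.
elim: h b c c' i j => [|h IH] b c c' i j /=.
  rewrite mxE; apply: leq_trans (size_comp_poly_leq _ _) _.
  have sq : (size ((c 0%N)%:P + c' 0%N *: 'X : {poly R})%R <= 2)%N.
    apply: leq_trans (size_polyD _ _) _; rewrite geq_max size_polyC.
    by rewrite (leq_trans (leq_b1 _)) //= (leq_trans (size_scale_leq _ _)) // size_polyX.
  have := hT b i j; move: sq; rewrite mul1n; nia.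
apply: leq_trans (size_mx_mul (IH _ _ _) (IH _ _ _) i j) _; rewrite expnS; lia.
Qed.

Definition seqof (beta : 'cV[R]_K) (Q : nat -> 'cV[R]_K) : nat -> R :=
  fun i => (beta^T *m Q i) 0 0.

Lemma seqofD beta beta' t Q i :
  seqof (beta + t *: beta') Q i = seqof beta Q i + t * seqof beta' Q i.
Proof. by rewrite /seqof linearD linearZ /= mulmxDl -scalemxAl !mxE. Qed.

Definition Qnext (A B : 'M[R]_K) (Q : nat -> 'cV[R]_K) h : nat -> 'cV[R]_K :=
  fun i => if (i < 2 ^ h)%N then A *m Q i else B *m Q (i - 2 ^ h)%N.

Variable n : nat.

Definition Good h (Q : nat -> 'cV[R]_K) := forall b, (b < 2 ^ (n - h))%N ->
  forall z : 'cV[R]_(w * w),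
    (forall beta, mxvec (blk h b (seqof beta Q)) *m z = 0) ->
    forall c, mxvec (blk h b c) *m z = 0.

Lemma mxvec_mulr (X Y : 'M[R]_w) (z : 'cV[R]_(w * w)) :
  mxvec (X *m Y) *m z = mxvec X *m (lin_mx (mulmxr Y) *m z).
Proof. by rewrite mulmxA mul_vec_lin. Qed.

Lemma mxvec_mull (X Y : 'M[R]_w) (z : 'cV[R]_(w * w)) :
  mxvec (X *m Y) *m z = mxvec Y *m (lin_mx (mulmx X) *m z).
Proof. by rewrite mulmxA mul_vec_lin. Qed.

Lemma spanL_ann (vs : seq 'rV[R]_(w * w)) (v : 'rV[R]_(w * w)) (z : 'cV[R]_(w * w)) :
  (forall v', v' \in vs -> v' *m z = 0) -> (v <= spanL vs)%MS -> v *m z = 0.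
Proof.
elim: vs v => [|v1 vs IH] v H /=.
  by rewrite /spanL /= submx0 => /eqP ->; rewrite mul0mx.
rewrite /spanL /= -/(spanL vs) => /sub_addsmxP [[u1 u2] /= ->].
rewrite mulmxDl -!mulmxA (H v1 (mem_head _ _)) mulmx0 add0r.
have : (spanL vs <= spanL vs)%MS by [].
move/submxP: (submx_refl (spanL vs)) => _.
suff -> : spanL vs *m z = 0 by rewrite mulmx0.
apply/row_matrixP => i; rewrite row_mul row0; apply: IH.
  by move=> v' v'in; apply: H; rewrite in_cons v'in orbT.
exact: row_sub.
Qed.


Definition line2 (a b : 'cV[R]_K * 'cV[R]_K) (t : R) : 'cV[R]_K * 'cV[R]_K :=
  (a.1 + t *: (b.1 - a.1), a.2 + t *: (b.2 - a.2)).

Lemma line20 a b : line2 a b 0 = a.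
Proof. by case: a => x y; rewrite /line2 !scale0r !addr0. Qed.

Lemma line21 a b : line2 a b 1 = b.
Proof. by case: a; case: b => x y x' y'; rewrite /line2 /=; congr (_, _); rewrite scale1r addrC subrK. Qed.

Lemma mxvec_entry_size (X : 'M[{poly R}]_w) D j :
  (forall a b, size (X a b) <= D)%N -> (size (mxvec X ord0 j) <= D)%N.
Proof. by move=> H; case/mxvec_indexP: j => a b; rewrite mxvecE. Qed.

Lemma seqof_Qnext A B Q h beta i :
  seqof beta (Qnext A B Q h) i =
  if (i < 2 ^ h)%N then seqof (A^T *m beta) Q i
  else seqof (B^T *m beta) Q (i - 2 ^ h)%N.
Proof.
by rewrite /seqof /Qnext; case: ifP => _; rewrite trmx_mul trmxK mulmxA.
Qed.

Lemma good_step h Q (s : seq R) (v0 : 'cV[R]_K * 'cV[R]_K) :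
  uniq s -> (2 ^ n * d < size s)%N -> (w * w <= K)%N -> (h < n)%N ->
  Good h Q -> exists A B, Good h.+1 (Qnext A B Q h).
Proof.
move=> us ltS wK hn G.
pose Phi b (u : 'cV[R]_K * 'cV[R]_K) :=
  blk h b.*2 (seqof u.1 Q) *m blk h b.*2.+1 (seqof u.2 Q).
have lp : forall b, (b < 2 ^ (n - h.+1))%N ->
    lpolyv line2 (2 ^ h.+1 * d) (fun u => mxvec (Phi b u)).
  move=> b _ a a'.
  exists (mxvec (blkP h b.*2 (seqof a.1 Q) (seqof (a'.1 - a.1) Q) *m
                 blkP h b.*2.+1 (seqof a.2 Q) (seqof (a'.2 - a.2) Q))).
  split.
    move=> j; apply: mxvec_entry_size => i j'.
    apply: leq_trans (size_mx_mul (blkP_size _ _ _ _) (blkP_size _ _ _ _) i j') _.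
    by rewrite expnS; lia.
  move=> t.
  have -> : map_mx (fun p : {poly R} => p.[t]) = map_mx (horner_eval t).
    by [].
  rewrite map_mxvec map_mxM !blkP_eval /Phi /line2 /=.
  congr (mxvec (_ *m _)); apply: blk_ext => i _; exact: seqofD.
have nD : (2 ^ (n - h.+1) * (2 ^ h.+1 * d) = 2 ^ n * d)%N.
  by rewrite mulnA -expnD subnK.
case: (@greedy R _ line2 line20 line21 (w * w) (2 ^ h.+1 * d) s v0
   (2 ^ (n - h.+1)) (fun b u => mxvec (Phi b u)) us _ lp) => [|vs [szv Hv]].
  by rewrite nD.
pose A : 'M[R]_K := \matrix_(i, a) (nth v0 vs i).1 a 0.
pose B : 'M[R]_K := \matrix_(i, a) (nth v0 vs i).2 a 0.
exists A, B => b ltb z Hz c.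
have ltb2 : (b.*2 < 2 ^ (n - h))%N.
  move: ltb; have -> : (n - h = (n - h.+1).+1)%N by lia.
  by rewrite expnS; lia.
have ltb21 : (b.*2.+1 < 2 ^ (n - h))%N.
  move: ltb; have -> : (n - h = (n - h.+1).+1)%N by lia.
  by rewrite expnS; lia.
have blkQ : forall beta, blk h.+1 b (seqof beta (Qnext A B Q h)) =
    Phi b (A^T *m beta, B^T *m beta).
  move=> beta /=; congr (_ *m _); apply: blk_ext => i lti.
    by rewrite seqof_Qnext lti.
  by rewrite seqof_Qnext ltnNge leq_addl /= addnK.
have Hus : forall u, u \in vs -> mxvec (Phi b u) *m z = 0.
  move=> u uin.
  have lti : (index u vs < K)%N by apply: leq_trans wK; rewrite -szv index_mem.
  have := Hz (delta_mx (Ordinal lti) 0); rewrite blkQ -!colE.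
  suff -> : (col (Ordinal lti) A^T, col (Ordinal lti) B^T) = u by [].
  have nu := nth_index v0 uin.
  rewrite [RHS](surjective_pairing u).
  by congr (_, _); apply/matrixP => a j; rewrite [j]ord1 !mxE /= nu.
have Hall : forall u, mxvec (Phi b u) *m z = 0.
  move=> u; apply: (@spanL_ann (map (fun u => mxvec (Phi b u)) vs)).
    by move=> v' /mapP [u' u'in ->]; apply: Hus.
  exact: Hv.
have Sa : forall g c0, mxvec (blk h b.*2 c0 *m blk h b.*2.+1 (seqof g Q)) *m z = 0.
  move=> g c0; rewrite mxvec_mulr; apply: (G _ ltb2) => beta.
  by rewrite -mxvec_mulr; apply: (Hall (beta, g)).
rewrite /= mxvec_mull; apply: (G _ ltb21) => g.
by rewrite -mxvec_mull; apply: Sa.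
Qed.

Fixpoint Qbuild (i0 : 'I_K) (G : nat -> 'M[R]_K * 'M[R]_K) (h : nat) : nat -> 'cV[R]_K :=
  match h with
  | 0 => fun _ => delta_mx i0 0
  | h'.+1 => Qnext (G h').1 (G h').2 (Qbuild i0 G h') h'
  end.

Lemma Qbuild_ext i0 G G' h : (forall j, (j < h)%N -> G j = G' j) ->
  Qbuild i0 G h = Qbuild i0 G' h.
Proof.
elim: h => [|h IH] H //=; rewrite IH ?H //; move=> j ltj; apply: H; lia.
Qed.

Lemma good0 i0 G : Good 0 (Qbuild i0 G 0).
Proof.
move=> b _ z Hz c; have := Hz ((c 0%N) *: delta_mx i0 0) => /=.
suff -> : seqof (c 0%N *: delta_mx i0 0) (fun _ => delta_mx i0 0) 0%N = c 0%N by [].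
rewrite /seqof linearZ /= -scalemxAl mxE.
by rewrite trmx_delta mul_delta_mx mxE !eqxx mulr1.
Qed.

Lemma good_all (i0 : 'I_K) (s : seq R) :
  uniq s -> (2 ^ n * d < size s)%N -> (w * w <= K)%N ->
  exists G, Good n (Qbuild i0 G n).
Proof.
move=> us ltS wK.
suff H : forall h, (h <= n)%N -> exists G, Good h (Qbuild i0 G h) by apply: H.
elim=> [|h IH] hn; first by exists (fun _ => (0, 0)); apply: good0.
have [G HG] := IH (ltnW hn).
have [A [B HAB]] := good_step (0, 0) us ltS wK hn HG.
exists (fun j => if j == h then (A, B) else G j) => /=.
rewrite eqxx /= (@Qbuild_ext i0 _ G) //.
by move=> j ltj; rewrite (ltn_eqF ltj).
Qed.

End Core.


Section MP.
Variable R : fieldType.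
Variable L : nat.

Definition sat (P : 'X_{1..L} -> Prop) (p : {mpoly R[L]}) :=
  forall m, m \in msupp p -> P m.

Lemma sat0 P : sat P 0.
Proof. by move=> m; rewrite msupp0. Qed.

Lemma satD P p q : sat P p -> sat P q -> sat P (p + q).
Proof. by move=> Hp Hq m /msuppD_le; rewrite mem_cat => /orP [/Hp|/Hq]. Qed.

Lemma satB P p q : sat P p -> sat P q -> sat P (p - q).
Proof. by move=> Hp Hq m /msuppB_le; rewrite mem_cat => /orP [/Hp|/Hq]. Qed.

Lemma satZ P c p : sat P p -> sat P (c *: p).
Proof. by move=> Hp m /msuppZ_le /Hp. Qed.

Lemma sat_sum P (I : Type) (r : seq I) (F : I -> {mpoly R[L]}) :
  (forall i, sat P (F i)) -> sat P (\sum_(i <- r) F i).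
Proof.
move=> H; elim: r => [|i r IH]; first by rewrite big_nil; exact: sat0.
by rewrite big_cons; apply: satD.
Qed.

Lemma satM (P1 P2 P3 : 'X_{1..L} -> Prop) p q :
  (forall m1 m2, P1 m1 -> P2 m2 -> P3 (m1 + m2)%MM) ->
  sat P1 p -> sat P2 q -> sat P3 (p * q).
Proof.
move=> H Hp Hq m /msuppM_le /allpairsP [[m1 m2] /= [in1 in2 ->]].
by apply: H; [apply: Hp|apply: Hq].
Qed.

Lemma satX P m : P m -> sat P 'X_[m].
Proof. by move=> Pm m'; rewrite msuppX inE => /eqP ->. Qed.

Lemma sat_true p : sat (fun _ => True) p.
Proof. by []. Qed.

Lemma univ_widen (j : 'I_L) (p : {poly R}) N : (size p <= N)%N ->
  univ_in_var j p = \sum_(k < N) p`_k *: 'X_j ^+ k.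
Proof.
move=> sN; rewrite /univ_in_var (big_ord_widen _ (fun k => p`_k *: 'X_j ^+ k) sN).
rewrite big_mkcond /=; apply: eq_bigr => k _; case: ifP => // /negbT.
by rewrite -leqNgt => /(nth_default 0) ->; rewrite scale0r.
Qed.

Lemma sat_univ (j : 'I_L) (p : {poly R}) :
  sat (fun m => exists2 k, (k < size p)%N & m = (U_(j) *+ k)%MM) (univ_in_var j p).
Proof.
rewrite /univ_in_var; elim/big_ind: _ => //; first exact: sat0.
  by move=> x y; apply: satD.
move=> k _; apply: satZ; rewrite mpolyXn; apply: satX; by exists k.
Qed.

Variable d : nat.
Definition trunc (p : {poly R}) : {poly R} := \poly_(k < d.+1) p`_k.

Lemma size_trunc p : (size (trunc p) <= d.+1)%N.
Proof. exact: size_poly. Qed.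

Lemma sat_univ_diff (j : 'I_L) (p : {poly R}) :
  sat (fun m => exists v, (d < m v)%N) (univ_in_var j p - univ_in_var j (trunc p)).
Proof.
pose N := maxn (size p) d.+1.
rewrite (@univ_widen j p N) ?leq_maxl // (@univ_widen j (trunc p) N); last first.
  by apply: leq_trans (size_trunc _) _; rewrite leq_maxr.
rewrite -sumrB; apply: sat_sum => k.
rewrite -scalerBl /trunc coef_poly; case: ifP => [_|/negbT]; first by rewrite subrr scale0r; exact: sat0.
rewrite -leqNgt => dk; apply: satZ; rewrite mpolyXn; apply: satX.
by exists j; rewrite mulmnE mnm1E eqxx mul1n.
Qed.

Variable sigma : 'S_L.
Variable w : nat.
Variable M : 'I_L -> 'M[{poly R}]_w.

Definition PM (x : 'I_L) := map_mx (univ_in_var (sigma x)) (M x).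
Definition PT (x : 'I_L) := map_mx (univ_in_var (sigma x)) (map_mx trunc (M x)).

Definition lowP (r : seq 'I_L) (m : 'X_{1..L}) :=
  (forall v, m v <= d)%N /\ forall v, v \notin map sigma r -> m v = 0%N.

Lemma sat_one P (a b : 'I_w) : P 0%MM -> sat P ((1%:M : 'M[{mpoly R[L]}]_w) a b).
Proof.
move=> P0; rewrite mxE; case: (a == b); first by rewrite mulr1n -mpolyX0; exact: satX.
by rewrite mulr0n; exact: sat0.
Qed.

Lemma prod_low (r : seq 'I_L) : uniq (map sigma r) -> forall a b,
  sat (lowP r) ((\big[@mulmx _ w w w/1%:M]_(x <- r) PT x) a b).
Proof.
elim: r => [|x r IH] /= un a b.
  rewrite big_nil; apply: sat_one; split=> v; by rewrite mnm0E.
move: un => /andP [nx un].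
rewrite big_cons mxE; apply: sat_sum => l.
apply: (@satM (fun m => exists2 k, (k < size (trunc (M x a l)))%N &
    m = (U_(sigma x) *+ k)%MM) (lowP r)); last exact: IH.
  move=> m1 m2 [k szk ->] [H1 H2]; split => v; rewrite mnmDE mulmnE mnm1E.
    case: eqP => [<-|_]; last by rewrite mul0n add0n.
    rewrite H2 // addn0 mul1n.
    by rewrite -ltnS; apply: leq_trans szk (size_trunc _).
  rewrite in_cons negb_or => /andP [nv nr].
  case: eqP => [E|_]; first by move: nv; rewrite E eqxx.
  by rewrite mul0n add0n H2.
by rewrite /PT !mxE; exact: sat_univ.
Qed.

Definition hiP (m : 'X_{1..L}) := exists v, (d < m v)%N.

Lemma prod_high (r : seq 'I_L) : forall a b,
  sat hiP ((\big[@mulmx _ w w w/1%:M]_(x <- r) PM x -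
            \big[@mulmx _ w w w/1%:M]_(x <- r) PT x) a b).
Proof.
elim: r => [|x r IH] a b.
  by rewrite !big_nil subrr mxE; exact: sat0.
rewrite !big_cons.
set A := PM x; set A' := PT x.
set B := \big[_/_]_(i <- r) PM i; set B' := \big[_/_]_(i <- r) PT i.
have -> : A *m B - A' *m B' = (A - A') *m B + A' *m (B - B').
  by rewrite mulmxBl mulmxBr addrA subrK.
rewrite [X in sat _ X]mxE; apply: satD; rewrite mxE; apply: sat_sum => l.
  apply: (@satM hiP (fun _ => True)) => //.
    by move=> m1 m2 [v Hv] _; exists v; rewrite mnmDE; lia.
  rewrite /A /A' /PM /PT [X in sat _ X]mxE [X in sat _ (_ + X)]mxE !mxE.
  exact: sat_univ_diff.
apply: (@satM (fun _ => True) hiP) => //.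
  by move=> m1 m2 _ [v Hv]; exists v; rewrite mnmDE; lia.
Qed.

Lemma trunc_eq (i0 : 'I_w) :
  indiv_deg_le d (roABP_mx sigma M i0 i0) ->
  roABP_mx sigma M i0 i0 = roABP_mx sigma (fun r => map_mx trunc (M r)) i0 i0.
Proof.
move=> Hdeg; apply/eqP; rewrite -subr_eq0; apply/eqP/msuppnil0.
set E := _ - _.
have hE : sat hiP E.
  have := @prod_high (index_enum 'I_L) i0 i0.
  by rewrite [X in sat _ X]mxE [X in sat _ (_ + X)]mxE.
have lE : sat (lowP (index_enum 'I_L)) (roABP_mx sigma (fun r => map_mx trunc (M r)) i0 i0).
  apply: prod_low; rewrite map_inj_uniq ?index_enum_uniq //; exact: perm_inj.
case Es: (msupp E) => [//|m s].
have min : m \in msupp E by rewrite Es mem_head.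
have [v Hv] := hE m min.
move: min => /msuppB_le; rewrite mem_cat => /orP [/Hdeg H|/lE [H _]].
  by move: (H v); rewrite leqNgt Hv.
by move: (H v); rewrite leqNgt Hv.
Qed.

End MP.


Section MP2.
Variable R : fieldType.
Variable L : nat.

Lemma univ_eval (x : 'I_L -> R) (j : 'I_L) (p : {poly R}) :
  (univ_in_var j p).@[x] = p.[x j].
Proof.
rewrite /univ_in_var horner_coef (big_morph (meval x) (mevalD x) (meval0 x)).
apply: eq_bigr => k _.
by rewrite mevalZ rmorphXn /= mevalXU.
Qed.

Lemma roABP_eval w (sigma : 'S_L) (M : 'I_L -> 'M[{poly R}]_w) (x : 'I_L -> R) a b :
  (roABP_mx sigma M a b).@[x] =
  (\big[@mulmx _ w w w/1%:M]_(i < L) map_mx (fun p => p.[x (sigma i)]) (M i)) a b.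
Proof.
have E : forall A : 'M[{mpoly R[L]}]_w, (A a b).@[x] = (map_mx (meval x) A) a b.
  by move=> A; rewrite mxE.
have H : forall (r : seq 'I_L),
    map_mx (meval x) (\big[@mulmx _ w w w/1%:M]_(i <- r) map_mx (univ_in_var (sigma i)) (M i)) =
    \big[@mulmx _ w w w/1%:M]_(i <- r) map_mx (fun p => p.[x (sigma i)]) (M i).
  elim=> [|i r IH]; first by rewrite !big_nil map_mx1.
  rewrite !big_cons map_mxM IH; congr (_ *m _).
  by apply/matrixP => a' b'; rewrite !mxE; apply: univ_eval.
by rewrite E /roABP_mx H.
Qed.


Definition mz (vk : 'I_L) (m : 'X_{1..L}) : 'X_{1..L} :=
  [multinom (if i == vk then 0%N else m i) | i < L].

Lemma mzK vk m : (mz vk m + U_(vk) *+ m vk)%MM = m.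
Proof.
apply/mnmP => i; rewrite mnmDE mnmE mulmnE mnm1E.
by rewrite [vk == i]eq_sym; case: eqP => [->|_]; rewrite ?add0n ?mul1n ?mul0n ?addn0.
Qed.

Definition setx (x : 'I_L -> R) (vk : 'I_L) (t : R) : 'I_L -> R :=
  fun i => if i == vk then t else x i.

Variable d : nat.

Definition pj (p : {mpoly R[L]}) (vk : 'I_L) (j : nat) : {mpoly R[L]} :=
  \sum_(m <- msupp p) (if m vk == j then p@_m *: 'X_[mz vk m] else 0).

Lemma pj_decomp p vk : (forall m, m \in msupp p -> m vk <= d)%N ->
  p = \sum_(j < d.+1) pj p vk j * 'X_vk ^+ j.
Proof.
move=> Hd.
rewrite [LHS]mpolyE.
rewrite /pj; under [RHS]eq_bigr => j _ do rewrite mulr_suml.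
rewrite exchange_big /=; apply: eq_big_seq => m min.
have ltm : (m vk < d.+1)%N by rewrite ltnS Hd.
rewrite (bigD1 (Ordinal ltm)) //= eqxx big1 ?addr0.
  by rewrite -scalerAl mpolyXn -mpolyXD mzK.
move=> j nj; case: eqP => [E|_]; last by rewrite mul0r.
by move: nj; rewrite -(inj_eq val_inj) /= E eqxx.
Qed.

Lemma pj_eval p vk j x t : (pj p vk j).@[setx x vk t] = (pj p vk j).@[x].
Proof.
rewrite /pj !(big_morph (meval _) (mevalD _) (meval0 _)).
apply: eq_bigr => m _; case: ifP => _; last by rewrite !meval0.
rewrite !mevalZ !mevalX; congr (_ * _); apply: eq_bigr => i _.
rewrite /setx mnmE; case: eqP => // ->; by rewrite !expr0.
Qed.

Lemma pj_supp p vk j m : m \in msupp (pj p vk j) ->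
  exists2 m', m' \in msupp p & m = mz vk m'.
Proof.
move/msupp_sum_le => /flattenP [ms /mapP [m' m'in ->]].
case: ifP => _; last by rewrite msupp0.
by move/msuppZ_le; rewrite msuppX inE => /eqP ->; exists m' => //; move: m'in; rewrite mem_filter.
Qed.

Lemma vanish_gen (s : seq R) : uniq s -> (d < size s)%N ->
  forall k (p : {mpoly R[L]}), (forall m, m \in msupp p -> (forall v, m v <= d)%N /\
                 forall v : 'I_L, (k <= v)%N -> m v = 0%N) ->
  (forall x, p.@[x] = 0) -> p = 0.
Proof.
move=> us lts; elim=> [|k IH] p Hp H0.
  have Hm : forall m, m \in msupp p -> m = 0%MM.
    by move=> m /Hp [_ H]; apply/mnmP => v; rewrite mnm0E H.
  have Ep : p = (\sum_(m <- msupp p) p@_m) *: 1.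
    rewrite [LHS]mpolyE scaler_suml; apply: eq_big_seq => m /Hm ->.
    by rewrite mpolyX0.
  have := H0 (fun _ => 0); rewrite Ep mevalZ meval1 mulr1 => c0.
  by rewrite c0 scale0r.
case: (ltnP k L) => [ltkL|geL]; last first.
  apply: IH => // m /Hp [H1 H2]; split=> // v kv.
  by move: (ltn_ord v); lia.
pose vk := Ordinal ltkL.
have Hdk : forall m, m \in msupp p -> (m vk <= d)%N by move=> m /Hp [->].
rewrite (pj_decomp Hdk) big1 // => j _.
suff -> : pj p vk j = 0 by rewrite mul0r.
apply: IH.
  move=> m /pj_supp [m' /Hp [H1 H2] ->]; split.
    by move=> v; rewrite mnmE; case: ifP.
  move=> v kv; rewrite mnmE; case: eqP => // /eqP nv.
  apply: H2; rewrite leq_eqVlt in kv; case/orP: kv => [/eqP E|//].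
  by move: nv; rewrite -(inj_eq val_inj) /= E eqxx.
move=> x.
pose q := \poly_(i < d.+1) (pj p vk i).@[x].
have q0 : q = 0.
  apply: contraTeq (lts) => qn0; rewrite -leqNgt.
  suff H : (size s < size q)%N by rewrite -ltnS; apply: leq_trans H (size_poly _ _).
  apply: max_poly_roots => //; apply/allP => t _; rewrite /root.
  rewrite horner_poly; apply/eqP.
  have E := H0 (setx x vk t); rewrite {1}(pj_decomp Hdk) in E.
  rewrite (big_morph (meval _) (mevalD _) (meval0 _)) in E; rewrite -[RHS]E.
  apply: eq_bigr => i _; rewrite mevalM pj_eval rmorphXn /= mevalXU /setx eqxx //.
have := congr1 (fun r : {poly R} => r`_j) q0; rewrite /= coef_poly coef0 ltn_ord //.
Qed.

Lemma vanish (s : seq R) (p : {mpoly R[L]}) : uniq s -> (d < size s)%N ->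
  indiv_deg_le d p -> (forall x, p.@[x] = 0) -> p = 0.
Proof.
move=> us lts Hd H0; apply: (@vanish_gen s us lts L) => // m /Hd H; split=> // v Lv.
by move: (ltn_ord v); lia.
Qed.

End MP2.


Fixpoint Pr (R : fieldType) (K : nat) (G : nat -> 'M[R]_K * 'M[R]_K) (h : nat) : nat -> 'M[R]_K :=
  match h with
  | 0 => fun _ => 1%:M
  | h'.+1 => fun i => if (i < 2 ^ h')%N then (G h').1 *m Pr G h' i
                      else (G h').2 *m Pr G h' (i - 2 ^ h')%N
  end.

Lemma Pr_ext (R : fieldType) (K : nat) (G G' : nat -> 'M[R]_K * 'M[R]_K) h :
  (forall j, (j < h)%N -> G j = G' j) -> Pr G h = Pr G' h.
Proof.
elim: h => [|h IH] H //=; rewrite IH ?H //; move=> j ltj; apply: H; lia.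
Qed.

Section Fcons.
Variable R : fieldType.
Variables n' K : nat.
Local Notation n := n'.+1.
Variable pi : 'S_n.
Variable G : nat -> 'M[R]_K * 'M[R]_K.

Definition pos (h : nat) : 'I_n := inord (n' - h).
Definition vh h := pi (pos h).

Fixpoint mu (h : nat) : nat -> 'X_{1..n} :=
  match h with
  | 0 => fun _ => 0%MM
  | h'.+1 => fun i => if (i < 2 ^ h')%N then mu h' i
                      else (mu h' (i - 2 ^ h') + U_(vh h'))%MM
  end.

Definition Mf (j : 'I_n) : 'M[{poly R}]_K :=
  map_mx polyC (G (n' - j)).1 + map_mx (fun a => a *: 'X) (G (n' - j)).2.

Definition liftm (m : 'X_{1..n}) (A : 'M[R]_K) : 'M[{mpoly R[n]}]_K :=
  map_mx (fun a => a *: 'X_[m]) A.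

Lemma liftM m1 m2 A B : liftm m1 A *m liftm m2 B = liftm (m1 + m2) (A *m B).
Proof.
apply/matrixP => i j; rewrite !mxE scaler_suml; apply: eq_bigr => l _.
by rewrite !mxE mpolyXD -scalerAl -scalerAr scalerA.
Qed.

Lemma liftD m A B : liftm m (A + B) = liftm m A + liftm m B.
Proof. by apply/matrixP => i j; rewrite !mxE scalerDl. Qed.

Lemma univ_lin (v : 'I_n) (c e : R) :
  univ_in_var v (c%:P + e *: 'X) = c *: 'X_[0%MM] + e *: 'X_[U_(v)].
Proof.
rewrite (@univ_widen R n v _ 2); last first.
  apply: leq_trans (size_polyD _ _) _; rewrite geq_max size_polyC.
  by rewrite (leq_trans (leq_b1 _)) //= (leq_trans (size_scale_leq _ _)) // size_polyX.
rewrite big_ord_recl big_ord1 /= !coefD !coefC !coefZ !coefX /=.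
by rewrite mulr0 mulr1 addr0 add0r expr0 expr1 mpolyX0.
Qed.

Definition PMf (j : nat) := map_mx (univ_in_var (pi (inord j))) (Mf (inord j)).

Lemma PMf_pos h : (h <= n')%N ->
  PMf (n' - h) = liftm 0 (G h).1 + liftm U_(vh h) (G h).2.
Proof.
move=> hn; rewrite /PMf /Mf /vh /pos; apply/matrixP => i j.
rewrite !mxE inordK; last by lia.
have -> : (n' - (n' - h) = h)%N by lia.
by rewrite univ_lin.
Qed.

Definition Suf h := \big[@mulmx _ K K K/1%:M]_(j <- iota (n - h) h) PMf j.

Lemma Suf_eq h : (h <= n)%N ->
  Suf h = \sum_(i <- iota 0 (2 ^ h)) liftm (mu h i) (Pr G h i).
Proof.
elim: h => [|h IH] hn.
  rewrite /Suf big_nil expn0 /= big_cons big_nil addr0.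
  apply/matrixP => i j; rewrite !mxE mpolyX0.
  by case: (i == j); rewrite ?mulr1n ?mulr0n ?scale1r ?scale0r.
have hn' : (h <= n')%N by lia.
rewrite /Suf.
have -> : iota (n - h.+1) h.+1 = (n' - h)%N :: iota (n - h) h.
  by rewrite /=; congr (_ :: iota _ _); lia.
rewrite big_cons -/(Suf h) IH ?(ltnW hn) // PMf_pos // mulmxDl !mulmx_sumr.
rewrite expnS mul2n -addnn iotaD big_cat /= add0n; congr (_ + _).
  apply: eq_big_seq => i; rewrite mem_iota /= add0n => lti.
  by rewrite liftM add0m /= lti.
have -> : iota (2 ^ h) (2 ^ h) = map (addn (2 ^ h)) (iota 0 (2 ^ h)).
  by rewrite -iotaDl addn0.
rewrite big_map; apply: eq_bigr => i _.
by rewrite liftM /= ltnNge leq_addr /= addKn addmC.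
Qed.

Lemma roABP_Suf : roABP_mx pi Mf = Suf n.
Proof.
rewrite /Suf subnn /roABP_mx.
rewrite -[iota 0 n]/(index_iota 0 n) big_mkord; apply: eq_bigr => j _.
by rewrite /PMf inord_val.
Qed.

Definition fpoly (i0 : 'I_K) : {mpoly R[n]} := roABP_mx pi Mf i0 i0.

Lemma fpolyE i0 :
  fpoly i0 = \sum_(i <- iota 0 (2 ^ n)) Pr G n i i0 i0 *: 'X_[mu n i].
Proof.
by rewrite /fpoly roABP_Suf Suf_eq // summxE; apply: eq_bigr => i _; rewrite mxE.
Qed.

Lemma vh_inj h1 h2 : (h1 <= n')%N -> (h2 <= n')%N -> vh h1 = vh h2 -> h1 = h2.
Proof.
move=> l1 l2 /perm_inj /(congr1 (@nat_of_ord _)); rewrite /pos !inordK; lia.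
Qed.

Lemma mu_zero h i h' : (h <= h')%N -> (h' <= n')%N -> mu h i (vh h') = 0%N.
Proof.
elim: h i => [|h IH] i hh hn /=; first by rewrite mnm0E.
case: ifP => _; first by apply: IH => //; lia.
rewrite mnmDE IH ?mnm1E; [|lia|lia].
case: eqP => [/vh_inj E|//]; have := E ltac:(lia) hn; lia.
Qed.

Lemma mu_le1 h i v : (h <= n)%N -> (mu h i v <= 1)%N.
Proof.
elim: h i => [|h IH] i hn /=; first by rewrite mnm0E.
case: ifP => _; first by apply: IH; lia.
rewrite mnmDE mnm1E; case: eqP => [<-|_]; last by rewrite addn0 IH //; lia.
by rewrite mu_zero //; lia.
Qed.

Lemma mu_inj h i i' : (h <= n)%N -> (i < 2 ^ h)%N -> (i' < 2 ^ h)%N ->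
  mu h i = mu h i' -> i = i'.
Proof.
elim: h i i' => [|h IH] i i' hn; first by rewrite expn0; lia.
move=> lti lti' /= E.
have hn' : (h <= n')%N by lia.
have Ev := congr1 (fun m : 'X_{1..n} => m (vh h)) E; move: Ev E => /=.
case: ifP => ci; case: ifP => ci'; rewrite ?mnmDE ?mu_zero ?mnm1E ?eqxx //.
- by move=> _; apply: IH => //; lia.
- move=> _ E.
  move/negbT: ci; rewrite -leqNgt => ci; move/negbT: ci'; rewrite -leqNgt => ci'.
  move: lti lti'; rewrite expnS => lti lti'.
  have : (i - 2 ^ h)%N = (i' - 2 ^ h)%N.
    apply: IH; [lia|lia|lia|].
    apply/mnmP => v; have := congr1 (fun m : 'X_{1..n} => m v) E.
    by rewrite /= !mnmDE => /addIn.
  lia.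
Qed.

Lemma mu_bits h i v : (h <= n)%N -> (i < 2 ^ h)%N ->
  mu h i v = (\sum_(h' < h) (v == vh h') * bit h' i)%N.
Proof.
elim: h i => [|h IH] i hn lti /=; first by rewrite mnm0E big_ord0.
rewrite big_ord_recr /=.
case: ifP => ci.
  rewrite IH //; last by lia.
  by rewrite bit_small // muln0 addn0.
have -> : i = (2 ^ h + (i - 2 ^ h))%N by lia.
rewrite addKn mnmDE IH; [|lia|by move: lti; rewrite expnS; lia].
rewrite bit_top; last by move: lti; rewrite expnS; lia.
rewrite mnm1E eq_sym muln1; congr (_ + _)%N; apply: eq_bigr => h' _.
by rewrite bit_low.
Qed.

Lemma fcoef i0 r : (r < 2 ^ n)%N -> (fpoly i0)@_(mu n r) = Pr G n r i0 i0.
Proof.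
move=> ltr; rewrite fpolyE (big_morph _ (mcoeffD _) (mcoeff0 _ _)).
rewrite (bigD1_seq r) ?iota_uniq ?mem_iota // mcoeffZ mcoeffX eqxx mulr1.
rewrite big_seq_cond big1 => [|i /andP [iin ni]]; first by rewrite Monoid.mulm1.
rewrite mcoeffZ mcoeffX; case: eqP => [E|]; last by rewrite mulr0.
move: iin; rewrite mem_iota add0n => /andP [_ lti].
by move: ni; rewrite (mu_inj (leqnn _) lti ltr E) eqxx.
Qed.

Lemma fmulti i0 : multilinear (fpoly i0).
Proof.
move=> m; rewrite fpolyE => /msupp_sum_le /flattenP [ms /mapP [i _ ->]].
by move/msuppZ_le; rewrite msuppX inE => /eqP -> v; apply: mu_le1.
Qed.

Lemma mu_mono r : (r < 2 ^ n)%N -> mu n r = mono_of_index n (lex_index pi r).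
Proof.
move=> ltr; apply/mnmP => v; rewrite mnmE mu_bits //.
have lt1 : (n' - ((pi^-1)%g v : nat) < n)%N by lia.
rewrite (bigD1 (Ordinal lt1)) //= big1; last first.
  move=> h nh; case: eqP => [E|]; last by rewrite mul0n.
  move: nh; rewrite -(inj_eq val_inj) /=.
  have : ((pi^-1)%g v : nat) = pos h by rewrite E /vh permK.
  rewrite /pos inordK; last by have := ltn_ord h; lia.
  have := ltn_ord h; have := ltn_ord ((pi^-1)%g v); lia.
have -> : vh (n' - ((pi^-1)%g v : nat)) = v.
  rewrite /vh /pos.
  have -> : (n' - (n' - ((pi^-1)%g v : nat)) = (pi^-1)%g v)%N by have := ltn_ord ((pi^-1)%g v); lia.
  by rewrite inord_val permKV.
rewrite eqxx mul1n addn0 /lex_index.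
pose a (l : nat) : bool := bit (n' - ((pi^-1)%g (inord l) : nat)) r.
rewrite (reindex_inj (@perm_inj _ (pi^-1)%g)) /=.
have -> : (\sum_(j < n) odd (r %/ 2 ^ (n - 1 - ((pi^-1)%g j))) * 2 ^ pi ((pi^-1)%g j)
   = \sum_(l < n) a l * 2 ^ l)%N.
  apply: eq_bigr => j _; rewrite permKV /a inord_val /bit.
  by have -> : (n - 1 = n')%N by lia.
rewrite -/(bit v _) bit_sum // /a inord_val //.
Qed.

End Fcons.


Lemma bigmx_cat (R : fieldType) w (I : Type) (r1 r2 : seq I) (F : I -> 'M[R]_w) :
  \big[@mulmx _ w w w/1%:M]_(i <- r1 ++ r2) F i =
  \big[@mulmx _ w w w/1%:M]_(i <- r1) F i *m \big[@mulmx _ w w w/1%:M]_(i <- r2) F i.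
Proof.
elim: r1 => [|x r1 IH] /=; first by rewrite big_nil mul1mx.
by rewrite !big_cons IH mulmxA.
Qed.

Lemma blk_big (R : fieldType) w (T : nat -> 'M[{poly R}]_w) h b c :
  blk T h b c = \big[@mulmx _ w w w/1%:M]_(i <- iota 0 (2 ^ h)) Ev T (b * 2 ^ h + i) (c i).
Proof.
elim: h b c => [|h IH] b c /=.
  by rewrite expn0 big_cons big_nil mulmx1 muln1 addn0.
rewrite !IH; have -> : (2 ^ h.+1 = 2 ^ h + 2 ^ h)%N by rewrite expnS; lia.
rewrite iotaD bigmx_cat add0n; congr (_ *m _).
  by apply: eq_bigr => i _; congr (Ev _ _ _); nia.
have -> : iota (2 ^ h) (2 ^ h) = map (addn (2 ^ h)) (iota 0 (2 ^ h)).
  by rewrite -iotaDl addn0.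
rewrite big_map; apply: eq_bigr => i _; rewrite [(i + 2 ^ h)%N]addnC; congr (Ev _ _ _).
nia.
Qed.

Lemma Qbuild_Pr (R : fieldType) K (i0 : 'I_K) (G : nat -> 'M[R]_K * 'M[R]_K) h i :
  Qbuild i0 G h i = Pr G h i *m delta_mx i0 0.
Proof.
elim: h i => [|h IH] i /=; first by rewrite mul1mx.
rewrite /Qnext; case: ifP => _; by rewrite IH mulmxA.
Qed.

Lemma delta_mul_entry (R : fieldType) K (i0 : 'I_K) (Y : 'M[R]_(1, K)) j :
  (delta_mx i0 0 *m Y) i0 j = Y 0 j.
Proof. by rewrite mxE big_ord1 mxE !eqxx mul1r. Qed.

Lemma mxvec_delta_entry (R : fieldType) w (X : 'M[R]_w) (a : 'I_w) :
  (mxvec X *m (delta_mx (mxvec_index a a) 0 : 'cV[R]_(w * w))) 0 0 = X a a.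
Proof. by rewrite -colE mxE mxvecE. Qed.

Lemma mx11_eq0 (R : fieldType) (A : 'M[R]_1) : A 0 0 = 0 -> A = 0.
Proof. by move=> H; apply/matrixP => i j; rewrite !ord1 H mxE. Qed.

Theorem theorem1p10 (R : fieldType) (n w d : nat) :
  (1 <= n)%N -> (1 <= w)%N -> (1 <= d)%N ->
  (exists a : R, mult_order_ge a ((2 ^ n * d * w ^ 2) ^ 2)) ->
  (exists s : seq R, uniq s /\ (w ^ 2 <= size s)%N) ->
  forall F : {mpoly R[2 ^ n]},
    F != 0 ->
    indiv_deg_le d F ->
    roABP_computes w (@monomial_compatible n) F ->
    exists f : {mpoly R[n]},
      multilinear f /\
      roABP_computes (w ^ 2) (fun _ => True) f /\
      F.@[coeff_vec f] != 0.
Proof.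
case: n => [//|n'] _ hw hd [a [an0 aord]] _ F Fn0 Fdeg [sigma [M [iw [[pi hpi] [iwv FE]]]]].
set B := ((2 ^ n'.+1 * d * w ^ 2) ^ 2)%N.
pose s := [seq a ^+ i | i <- iota 0 B].
have key : forall i j, (i < j)%N -> (j < B)%N -> a ^+ i = a ^+ j -> False.
  move=> i j lt ltj E.
  have : a ^+ (j - i) = 1.
    have ai : a ^+ i != 0 by rewrite expf_neq0.
    by apply: (mulfI ai); rewrite -exprD subnKC ?(ltnW lt) // mulr1.
  by apply/eqP; apply: aord; apply/andP; split; lia.
have us : uniq s.
  rewrite map_inj_in_uniq ?iota_uniq // => i j.
  rewrite !mem_iota !add0n => /andP [_ ltiB] /andP [_ ltjB] E.
  case: (ltngtP i j) => [l|l|//]; first by case: (key i j).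
  by case: (key j i).
have szs : size s = B by rewrite size_map size_iota.
have NB : (2 ^ n'.+1 * d < B)%N.
  rewrite /B; set X := (2 ^ n'.+1 * d * w ^ 2)%N.
  have h1 : (2 ^ n'.+1 * d <= X)%N by rewrite /X leq_pmulr // expn_gt0 hw.
  have h2 : (2 <= 2 ^ n'.+1)%N by rewrite -{1}(expn1 2) leq_exp2l.
  rewrite -mulnn; nia.
have dB : (d < size s)%N.
  rewrite szs; apply: leq_ltn_trans NB; rewrite leq_pmull ?expn_gt0 //.
have dB0 : (d < B)%N by apply: leq_ltn_trans NB; rewrite leq_pmull ?expn_gt0.

set N := (2 ^ n'.+1)%N.
have N0 : (0 < N)%N by rewrite expn_gt0.
pose j0 : 'I_N := Ordinal N0.
pose T (r : nat) := map_mx (trunc d) (M (insubd j0 r)).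
have hT : forall r a b, (size (T r a b) <= d.+1)%N.
  by move=> r a' b'; rewrite mxE; exact: size_trunc.
have wK : (w * w <= w ^ 2)%N by rewrite mulnn.
have K0 : (0 < w ^ 2)%N by rewrite expn_gt0 hw.
pose i0K : 'I_(w ^ 2) := Ordinal K0.
have NB' : (2 ^ n'.+1 * d < size s)%N by rewrite szs.
have [G0 HG] := good_all hT i0K us NB' wK.
set Q := Qbuild i0K G0 n'.+1.
have Feval : forall x, F.@[x] = blk T n'.+1 0 (fun i => x (sigma (insubd j0 i))) iw iw.
  move=> x; rewrite FE; rewrite FE in Fdeg; rewrite (trunc_eq Fdeg) roABP_eval blk_big mul0n.
  have -> : iota 0 N = index_iota 0 N by rewrite /index_iota subn0.
  rewrite big_mkord; congr (fun_of_matrix _ iw iw); apply: eq_bigr => i _.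
  by rewrite add0n /Ev /T valKd.
pose L (beta : 'cV[R]_(w ^ 2)) := delta_mx i0K 0 *m beta^T.
pose Gb beta := fun h => if h == n' then (L beta *m (G0 h).1, L beta *m (G0 h).2) else G0 h.
apply: NNPP => Hno.
have Hzero : forall beta, F.@[coeff_vec (fpoly pi (Gb beta) i0K)] = 0.
  move=> beta; apply: NNPP => nz; apply: Hno; exists (fpoly pi (Gb beta) i0K).
  split; first exact: fmulti.
  split; last by apply/eqP.
  by exists pi, (Mf (Gb beta)), i0K.
have Hcoef : forall beta r, (r < N)%N ->
    coeff_vec (fpoly pi (Gb beta) i0K) (sigma (insubd j0 r)) = seqof beta Q r.
  move=> beta r ltr; rewrite /coeff_vec hpi insubdK // -mu_mono // fcoef //.
  have -> : Pr (Gb beta) n'.+1 r = L beta *m Pr G0 n'.+1 r.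
    rewrite /= (@Pr_ext _ _ (Gb beta) G0 n'); last by move=> j ltj; rewrite /Gb (ltn_eqF ltj).
    by rewrite /Gb eqxx /=; case: ifP => _; rewrite mulmxA.
  by rewrite /seqof /Q Qbuild_Pr /L -mulmxA delta_mul_entry mulmxA -colE [RHS]mxE.
have Hb : forall beta, blk T n'.+1 0 (seqof beta Q) iw iw = 0.
  move=> beta; rewrite -(Hzero beta) Feval; congr (fun_of_matrix _ iw iw); apply: blk_ext => i lti.
  by rewrite Hcoef.
have Hall : forall c, blk T n'.+1 0 c iw iw = 0.
  move=> c; have := HG 0%N _ (delta_mx (mxvec_index iw iw) 0).
  rewrite subnn expn0 => /(_ isT) H.
  have Hz : forall beta, mxvec (blk T n'.+1 0 (seqof beta Q)) *m
      (delta_mx (mxvec_index iw iw) 0 : 'cV[R]_(w * w)) = 0.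
    by move=> beta; apply: mx11_eq0; rewrite mxvec_delta_entry Hb.
  have := H Hz c.
  by move=> E; have := congr1 (fun A : 'M[R]_1 => A 0 0) E; rewrite /= mxvec_delta_entry => ->; rewrite mxE.
move/eqP: Fn0; apply; apply: (vanish us dB Fdeg) => x.
by rewrite Feval Hall.
Qed.
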